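(* Let $n \geq 3$, let $\Omega = \bigcap_{m=0}^q \{u_m \leq 0\} \subset \mathbb{R}^n$ be a compact convex polytope with non-empty interior, and let $g$ be a Riemannian metric on $\mathbb{R}^n$, all satisfying the standing assumptions described in the context. Then for every $\varepsilon \in (0,1)$ there exists $\delta > 0$ with the following property: if $0 \leq j < k \leq q$ and $x \in \Omega$ satisfies $-\delta \leq u_j(x) \leq 0$ and $-\delta \leq u_k(x) \leq 0$, then $\langle \nu_j, \nu_k \rangle - \varepsilon \leq \langle N_j, N_k \rangle$ at $x$.
   Context: $u_0,\dots,u_q$ are non-constant linear (affine) functions on $\mathbb{R}^n$, $\Omega=\bigcap_{m=0}^q\{u_m\le0\}$ compact convex with non-empty interior. Standing assumptions: (a) for each $k$, $\{u_k>0\}\cap\bigcap_{m\neq k}\{u_m\le0\}\neq\emptyset$; (b) the Euclidean gradient of each $u_k$ is a unit vector $N_k\in S^{n-1}$; (c) for $j<k$, if some $x\in\Omega$ has $u_j(x)=u_k(x)=0$ then $\langle N_j,N_k\rangle\le0$ (Euclidean); (d) $\nu_k=\nabla u_k/|\nabla u_k|$ is the unit normal to level sets of $u_k$ computed with respect to $g$, and for $j<k$, if $x\in\Omega$ with $u_j(x)=u_k(x)=0$, then $\langle\nu_j,\nu_k\rangle\le\langle N_j,N_k\rangle$ at $x$, where $\langle\nu_j,\nu_k\rangle$ is the $g$-inner product and $\langle N_j,N_k\rangle$ the Euclidean one. *)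

(* Defs.v *)
From HB Require Import structures.
From mathcomp Require Import all_boot all_order all_algebra.
From mathcomp Require Import all_classical all_reals all_analysis.
Set Implicit Arguments. Unset Strict Implicit. Unset Printing Implicit Defensive.
Import Order.TTheory GRing.Theory Num.Theory.
Import numFieldNormedType.Exports.
Local Open Scope classical_set_scope.
Local Open Scope ring_scope.

Definition edot (R : realType) (n : nat) (a b : 'rV[R]_n) : R :=
  (a *m b^T) 0 0.

Fixpoint Ck (R : realType) (n : nat) (k : nat) (f : 'rV[R]_n -> R^o) : Prop :=
  match k with
  | 0%N => continuous f
  | k'.+1 => (forall x, differentiable f x) /\
             (forall v : 'rV[R]_n, Ck k' (fun x => 'D_v f x))
  end.

Definition smooth_fun (R : realType) (n : nat) (f : 'rV[R]_n -> R^o) : Prop :=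
  forall k, Ck k f.

(* A Riemannian metric on R^n: a smooth field of symmetric positive definite
   matrices g(x), with g(x)_{ij} = g_x(e_i, e_j). *)
Definition riemannian_metric (R : realType) (n : nat) (g : 'rV[R]_n -> 'M[R]_n) : Prop :=
  (forall i j, smooth_fun (fun x => g x i j)) /\
  (forall x, (g x)^T = g x) /\
  (forall x (v : 'rV[R]_n), v != 0 -> 0 < (v *m g x *m v^T) 0 0).

Definition ginner (R : realType) (n : nat) (G : 'M[R]_n) (v w : 'rV[R]_n) : R :=
  (v *m G *m w^T) 0 0.

(* g-gradient of an affine function whose Euclidean gradient (differential)
   is the row vector a: grad_g u = G^{-1} a (written as a row vector). *)
Definition ggrad (R : realType) (n : nat) (G : 'M[R]_n) (a : 'rV[R]_n) : 'rV[R]_n :=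
  a *m (invmx G)^T.

Definition gnormal (R : realType) (n : nat) (G : 'M[R]_n) (a : 'rV[R]_n) : 'rV[R]_n :=
  (Num.sqrt (ginner G (ggrad G a) (ggrad G a)))^-1 *: ggrad G a.

(* Main.v *)
Require Import Defs.
From HB Require Import structures.
From mathcomp Require Import all_boot all_order all_algebra.
From mathcomp Require Import all_classical all_reals all_analysis.
From mathcomp Require Import perm lra.
Import Order.TTheory GRing.Theory Num.Theory.
Import numFieldNormedType.Exports.
Set Implicit Arguments. Unset Strict Implicit. Unset Printing Implicit Defensive.
Local Open Scope classical_set_scope.
Local Open Scope ring_scope.

Definition cmx (R : realType) (T : topologicalType) m p (M : T -> 'M[R]_(m,p)) :=
  forall i j, continuous (fun x => M x i j).

Lemma csum (R : realType) (T : topologicalType) (I : Type) (r : seq I) (P : pred I)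
  (F : I -> T -> R) : (forall i, continuous (F i)) ->
  continuous (fun x => \sum_(i <- r | P i) F i x).
Proof.
move=> cF; elim: r => [|a r IH].
  under eq_fun => x do rewrite big_nil. exact: cst_continuous.
under eq_fun => x do rewrite big_cons.
case: (P a) => //. move=> x; apply: continuousD; [exact: (cF a x) | exact: IH].
Qed.

Lemma cprod (R : realType) (T : topologicalType) (I : Type) (r : seq I) (P : pred I)
  (F : I -> T -> R) : (forall i, continuous (F i)) ->
  continuous (fun x => \prod_(i <- r | P i) F i x).
Proof.
move=> cF; elim: r => [|a r IH].
  under eq_fun => x do rewrite big_nil. exact: cst_continuous.
under eq_fun => x do rewrite big_cons.
case: (P a) => //. move=> x; apply: continuousM; [exact: (cF a x) | exact: IH].
Qed.

Lemma contM (R : realType) (T : topologicalType) (f g : T -> R) :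
  continuous f -> continuous g -> continuous (fun x => f x * g x).
Proof. by move=> cf cg x; apply: cvgM; [exact: cf|exact: cg]. Qed.

Lemma contB (R : realType) (T : topologicalType) (f g : T -> R) :
  continuous f -> continuous g -> continuous (fun x => f x - g x).
Proof. by move=> cf cg x; apply: cvgB; [exact: cf|exact: cg]. Qed.

Lemma contD (R : realType) (T : topologicalType) (f g : T -> R) :
  continuous f -> continuous g -> continuous (fun x => f x + g x).
Proof. by move=> cf cg x; apply: cvgD; [exact: cf|exact: cg]. Qed.

Lemma contN (R : realType) (T : topologicalType) (f : T -> R) :
  continuous f -> continuous (fun x => - f x).
Proof. by move=> cf x; apply: cvgN; exact: cf. Qed.

Lemma contC (R : realType) (T : topologicalType) (a : R) :
  continuous (fun _ : T => a).
Proof. by move=> x; exact: cvg_cst. Qed.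

Lemma cmx_cst (R : realType) (T : topologicalType) m p (A : 'M[R]_(m,p)) :
  cmx (fun _ : T => A).
Proof. by move=> i j; exact: cst_continuous. Qed.

Lemma cmx_mul (R : realType) (T : topologicalType) m p r (A : T -> 'M[R]_(m,p))
  (B : T -> 'M[R]_(p,r)) : cmx A -> cmx B -> cmx (fun x => A x *m B x).
Proof.
move=> cA cB i j; under eq_fun => x do rewrite mxE.
apply: csum => k x; apply: continuousM; [exact: cA | exact: cB].
Qed.

Lemma cmx_tr (R : realType) (T : topologicalType) m p (A : T -> 'M[R]_(m,p)) :
  cmx A -> cmx (fun x => (A x)^T).
Proof. by move=> cA i j; under eq_fun => x do rewrite mxE; exact: cA. Qed.

Lemma cmx_scale (R : realType) (T : topologicalType) m p (s : T -> R) (A : T -> 'M[R]_(m,p)) :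
  continuous s -> cmx A -> cmx (fun x => s x *: A x).
Proof.
move=> cs cA i j; under eq_fun => x do rewrite mxE.
move=> x; apply: continuousM; [exact: cs | exact: cA].
Qed.

Lemma cmx_det (R : realType) (T : topologicalType) m (A : T -> 'M[R]_m) :
  cmx A -> continuous (fun x => \det (A x)).
Proof.
move=> cA; rewrite /determinant; apply: csum => s x.
have h := @continuousM R T (fun _ => (-1) ^+ perm.odd_perm s) (fun y => \prod_i A y i (s i)) x.
apply: h; first exact: cst_continuous.
by apply: cprod => i; exact: cA.
Qed.

Lemma cmx_adj (R : realType) (T : topologicalType) m (A : T -> 'M[R]_m) :
  cmx A -> cmx (fun x => \adj (A x)).
Proof.
move=> cA i j; under eq_fun => x do rewrite mxE /cofactor.
apply: contM; first exact: cst_continuous.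
apply: cmx_det => a b; under eq_fun => y do rewrite !mxE; exact: cA.
Qed.

Lemma cmx_inv (R : realType) (T : topologicalType) m (A : T -> 'M[R]_m) :
  cmx A -> (forall x, \det (A x) != 0) -> cmx (fun x => invmx (A x)).
Proof.
move=> cA d0 i j.
have E : forall x, invmx (A x) i j = (\det (A x))^-1 * \adj (A x) i j.
  move=> x; rewrite /invmx unitmxE unitfE d0 mxE //.
under eq_fun => x do rewrite E.
apply: contM; last exact: cmx_adj.
move=> x; have h := @continuousV R T (fun y => \det (A y)) x (d0 x).
by apply: h; exact: cmx_det.
Qed.
Lemma pd_unit (R : realType) n (G : 'M[R]_n) :
  (forall v : 'rV[R]_n, v != 0 -> 0 < (v *m G *m v^T) 0 0) -> G \in unitmx.
Proof.
move=> pd; rewrite -row_free_unit; apply/negPn/negP => nf.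
have kn : kermx G != 0.
  rewrite -mxrank_eq0 mxrank_ker subn_eq0.
  by move: nf; rewrite /row_free eqn_leq rank_leq_row.
set v := nz_row (kermx G).
have vn : v != 0 by rewrite nz_row_eq0.
have vG : v *m G = 0 by apply/eqP; rewrite -sub_kermx nz_row_sub.
by move: (pd v vn); rewrite vG mul0mx mxE ltxx.
Qed.

Lemma ggrad_ne0 (R : realType) n (G : 'M[R]_n) (a : 'rV[R]_n) :
  G \in unitmx -> a != 0 -> ggrad G a != 0.
Proof.
move=> uG; apply: contra => /eqP h.
have : ggrad G a *m G^T = a.
  by rewrite /ggrad -mulmxA -trmx_mul mulmxV // trmx1 mulmx1.
by rewrite h mul0mx => <-.
Qed.

Lemma edot_ne0 (R : realType) n (a : 'rV[R]_n) : edot a a = 1 -> a != 0.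
Proof.
move=> h; apply/eqP => a0; move: h; rewrite a0 /edot mul0mx mxE => /eqP.
by rewrite eq_sym oner_eq0.
Qed.

Lemma cont_F (R : realType) n (g : 'rV[R]_n -> 'M[R]_n) (a b : 'rV[R]_n) :
  cmx g -> (forall x (v : 'rV[R]_n), v != 0 -> 0 < (v *m g x *m v^T) 0 0) ->
  a != 0 -> b != 0 ->
  continuous (fun x => ginner (g x) (gnormal (g x) a) (gnormal (g x) b)).
Proof.
move=> cg pd a0 b0.
have dG x : \det (g x) != 0 by rewrite -unitfE -unitmxE pd_unit //; exact: pd.
have cI : cmx (fun x => invmx (g x)) by exact: cmx_inv.
have cW (c : 'rV[R]_n) : cmx (fun x => ggrad (g x) c).
  rewrite /ggrad; apply: cmx_mul; [exact: cmx_cst | exact: cmx_tr].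
have cS (c : 'rV[R]_n) : c != 0 ->
    continuous (fun x => (Num.sqrt (ginner (g x) (ggrad (g x) c) (ggrad (g x) c)))^-1).
  move=> c0 x.
  have pos : 0 < ginner (g x) (ggrad (g x) c) (ggrad (g x) c).
    by apply: (pd); apply: ggrad_ne0 => //; apply: pd_unit; exact: pd.
  have h := @continuousV R _ (fun y => Num.sqrt (ginner (g y) (ggrad (g y) c) (ggrad (g y) c))) x.
  apply: h; first by rewrite sqrtr_eq0 -ltNge.
  apply: (@continuous_comp _ _ _ (fun y => ginner (g y) (ggrad (g y) c) (ggrad (g y) c))).
    exact: (cmx_mul (cmx_mul (cW c) cg) (cmx_tr (cW c))).
  exact: sqrt_continuous.
have cN (c : 'rV[R]_n) : c != 0 -> cmx (fun x => gnormal (g x) c).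
  by move=> c0; exact: cmx_scale (cS c c0) (cW c).
exact: (cmx_mul (cmx_mul (cN a a0) cg) (cmx_tr (cN b b0))).
Qed.

Unset Implicit Arguments.
Theorem lemma4p2 (R : realType) (n q : nat)
  (u : 'I_q.+1 -> 'rV[R]_n -> R) (N : 'I_q.+1 -> 'rV[R]_n) (c : 'I_q.+1 -> R)
  (g : 'rV[R]_n -> 'M[R]_n) :
  (3 <= n)%N ->
  (* u_m affine with Euclidean gradient N_m, a unit vector (assumption (b)) *)
  (forall m x, u m x = edot (N m) x + c m) ->
  (forall m, edot (N m) (N m) = 1) ->
  let Omega := [set x | forall m, u m x <= 0] in
  compact Omega -> convex_set Omega -> (exists x, (Omega)° x) ->
  riemannian_metric g ->
  (* (a) *)
  (forall k, exists x, 0 < u k x /\ forall m, m != k -> u m x <= 0) ->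
  (* (c) *)
  (forall j k : 'I_q.+1, (j < k)%N ->
     (exists x, Omega x /\ u j x = 0 /\ u k x = 0) -> edot (N j) (N k) <= 0) ->
  (* (d) *)
  (forall j k : 'I_q.+1, (j < k)%N -> forall x, Omega x -> u j x = 0 -> u k x = 0 ->
     ginner (g x) (gnormal (g x) (N j)) (gnormal (g x) (N k)) <= edot (N j) (N k)) ->
  forall eps : R, 0 < eps < 1 ->
  exists delta : R, 0 < delta /\
    forall j k : 'I_q.+1, (j < k)%N -> forall x, Omega x ->
      - delta <= u j x <= 0 -> - delta <= u k x <= 0 ->
      ginner (g x) (gnormal (g x) (N j)) (gnormal (g x) (N k)) - eps <= edot (N j) (N k).
Proof.
move=> _ uE Nn Omega cO _ [x0 ix0] [cg0 [_ gpd]] _ _ hd eps /andP[eps0 _].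
have cg : cmx g by move=> i j; exact: (cg0 i j 0%N).
have cu m : continuous (u m).
  have -> : u m = (fun x => ((N m) *m x^T) 0 0 + c m) by apply: funext => x; rewrite uE.
  apply: contD; last exact: contC.
  have cid : cmx (fun x : 'rV[R]_n => x) by move=> i j; exact: coord_continuous.
  have h : cmx (fun x : 'rV[R]_n => N m *m x^T).
    by apply: cmx_mul; [exact: cmx_cst | exact: cmx_tr].
  exact: h.
have On : Omega !=set0 by exists x0; exact: interior_subset.
have key (p : 'I_q.+1 * 'I_q.+1) : exists d : R, 0 < d /\ ((p.1 < p.2)%N ->
    forall x, Omega x -> - d <= u p.1 x <= 0 -> - d <= u p.2 x <= 0 ->
    ginner (g x) (gnormal (g x) (N p.1)) (gnormal (g x) (N p.2)) - eps
       <= edot (N p.1) (N p.2)).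
  case: p => j k /=; case: (ltnP j k) => jk; last by exists 1; split => //; rewrite ltnNge jk.
  set F := fun x => ginner (g x) (gnormal (g x) (N j)) (gnormal (g x) (N k)).
  have cF : continuous F by apply: cont_F => //; exact: edot_ne0.
  pose psi := (fun x => - u j x - u k x) \max (fun x => edot (N j) (N k) + eps - F x).
  have cpsi : continuous psi.
    have c1 : continuous (fun x => - u j x - u k x).
      by apply: contB; [apply: contN; exact: cu | exact: cu].
    have c2 : continuous (fun x => edot (N j) (N k) + eps - F x).
      by apply: contB; [exact: contC | exact: cF].
    move=> x; apply: continuous_max; [exact: c1 | exact: c2].
  have [z zO zmin] := compact_EVT_min On cO (continuous_subspaceT cpsi).
  have zO' : Omega z by rewrite inE in zO.
  have pz : 0 < psi z.
    rewrite /psi /= lt_max; case: (ltrP 0 (- u j z - u k z)) => //= h.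
    have uj := zO' j; have uk := zO' k.
    have ujz : u j z = 0 by lra.
    have ukz : u k z = 0 by lra.
    have := hd j k jk z zO' ujz ukz; rewrite -/(F z) => hF; lra.
  exists (psi z / 4); split; first lra.
  move=> _ x xO /andP[hj1 hj2] /andP[hk1 hk2].
  have := zmin x (mem_set xO); rewrite {2}/psi /= le_max => /orP[] h; first lra.
  rewrite -/(F x); lra.
have [f hf] := choice key.
exists (\big[Order.min/1]_(p : 'I_q.+1 * 'I_q.+1) f p); split.
  by apply: lt_bigmin => // p _; case: (hf p).
move=> j k jk x xO /andP[hj1 hj2] /andP[hk1 hk2].
have le := bigmin_le 1 (j, k) f.
case: (hf (j, k)) => _ /(_ jk x xO) /=; apply.
  by apply/andP; split => //; lra.
by apply/andP; split => //; lra.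
Qed.
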